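(* Let $n\le -1$ be an odd integer with $3\mid n$. Then $$q_n-(1-w)\,q'_n\equiv -w\pmod 3,$$ where $q'_n=dq_n/dw$ and the congruence is coefficientwise in $\mathbb{Z}[w]$.
   Context: Define $q_n\in\mathbb{Z}[w]$ for odd $n\le -1$ by $q_{-1}=w^3-w^2+2w-7$, $q_{-3}=w^5-2w^4-2w^3+5w^2+3w-9$, $q_{-5}=w^7-2w^6-4w^5+8w^4+4w^3-7w^2+2w-7$, and $q_n=(w^2-1)(q_{n+2}-q_{n+4})+q_{n+6}$ for odd $n<-5$. *)

(* Defs.v *)
From HB Require Import structures.
From mathcomp Require Import all_boot all_order all_algebra.
Set Implicit Arguments. Unset Strict Implicit. Unset Printing Implicit Defensive.
Import Order.TTheory GRing.Theory Num.Theory.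
Local Open Scope ring_scope.

(* qseq k = q_{-(2k+1)} in the paper's notation. *)
Definition q_m1 : {poly int} := 'X^3 - 'X^2 + 2%:P * 'X - 7%:P.
Definition q_m3 : {poly int} :=
  'X^5 - 2%:P * 'X^4 - 2%:P * 'X^3 + 5%:P * 'X^2 + 3%:P * 'X - 9%:P.
Definition q_m5 : {poly int} :=
  'X^7 - 2%:P * 'X^6 - 4%:P * 'X^5 + 8%:P * 'X^4 + 4%:P * 'X^3
  - 7%:P * 'X^2 + 2%:P * 'X - 7%:P.

Fixpoint qseq (k : nat) : {poly int} :=
  match k with
  | 0%N => q_m1
  | 1%N => q_m3
  | 2%N => q_m5
  | S ((S (S k0 as k1)) as k2) =>
      ('X^2 - 1) * (qseq k2 - qseq k1) + qseq k0
  end.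

(* q_n for odd n <= -1 : n = -(2k+1), k = |n| / 2. (Values for other n are junk.) *)
Definition q (n : int) : {poly int} := qseq (absz n)./2.

(* Main.v *)
Require Import Defs.
From HB Require Import structures.
From mathcomp Require Import all_boot all_order all_algebra.
From Stdlib Require Import Ring.
Import Order.TTheory GRing.Theory Num.Theory.
Local Open Scope ring_scope.

Definition T := {poly int}.
Definition add' (x y : T) : T := x + y.
Definition mul' (x y : T) : T := x * y.
Definition opp' (x : T) : T := - x.
Definition sub' (x y : T) : T := x - y.
Definition zero' : T := 0.
Definition one' : T := 1.
Lemma Pring : @ring_theory T zero' one' add' mul' sub' opp' eq.
Proof.
rewrite /add' /mul' /sub' /opp' /zero' /one'.
split=> //; [exact: add0r|exact: addrC|exact: addrA|exact: mul1r|exact: mulrC|exact: mulrA|exact: mulrDl|exact: subrr].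
Qed.
Add Ring Pr : Pring.
Lemma foldA (x y : {poly int}) : x + y = add' x y. Proof. by []. Qed.
Lemma foldM (x y : {poly int}) : x * y = mul' x y. Proof. by []. Qed.
Lemma foldN (x : {poly int}) : - x = opp' x. Proof. by []. Qed.
Lemma fold0 : (0 : {poly int}) = zero'. Proof. by []. Qed.
Lemma fold1 : (1 : {poly int}) = one'. Proof. by []. Qed.
Lemma pC (n : nat) : ((Posz n)%:P : {poly int}) = n%:R.
Proof. by rewrite -polyC_natr natz. Qed.
Ltac pring := rewrite ?foldA ?foldM ?foldN ?fold0 ?fold1; match goal with |- @eq _ ?a ?b => change (@eq T a b) end; ring.
Ltac norm := rewrite ?pC ?exprS ?expr0 ?mulrS ?mulr0n.


Lemma d1 : (1 : {poly int})^`() = 0.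
Proof. by rewrite -polyC1 derivC. Qed.

Definition F : {poly int} := 'X^2 - 1.
Definition p2 : {poly int} := 'X^2 + 3%:P * 'X - 9%:P.

Fixpoint pp (k : nat) : {poly int} :=
  match k with
  | 0%N => q_m3
  | 1%N => q_m1
  | 2%N => p2
  | S ((S (S k0 as k1)) as k2) => F * (pp k2 - pp k1) + pp k0
  end.

Lemma pp_rec k : pp k.+3 = F * (pp k.+2 - pp k.+1) + pp k.
Proof. by []. Qed.

Lemma qseq_pp k : qseq k = pp k.+4.+1.
Proof.
suff H : qseq k = pp k.+4.+1 /\ qseq k.+1 = pp k.+4.+2 /\ qseq k.+2 = pp k.+4.+3 by case: H.
elim: k => [|k [H0 [H1 H2]]].
  rewrite !pp_rec /= /q_m1 /q_m3 /q_m5 /p2 /F.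
  by split; [|split]; norm; pring.
split; first by [].
split; first by [].
change (qseq k.+3) with (('X^2-1)*(qseq k.+2 - qseq k.+1) + qseq k).
by rewrite pp_rec -H0 -H1 -H2.
Qed.

Definition cc : {poly int} := (F-1)*(F-1)*(F-1) - ((F-1)+(F-1)+(F-1)).

Lemma pp_rec3 k : pp k.+3.+3.+3 =
  pp k.+3.+3 + cc * (pp k.+3.+3 - pp k.+3) - (pp k.+3 - pp k).
Proof.
rewrite !pp_rec /cc.
move: (pp k) (pp k.+1) (pp k.+2) => a b c.
pring.
Qed.

Definition dv3 (p : {poly int}) := exists h, p = h + h + h.

Lemma dcc : dv3 cc^`().
Proof.
rewrite /cc; move: (F - 1) => s.
exists (s * s * s^`() - s^`()).
rewrite !(derivD, derivN, derivM).
move: (s^`()) => t.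
pring.
Qed.

Definition r j := (1 - 'X) * pp j.

Lemma r_rec3 k : (r k.+3.+3.+3)^`() =
  (r k.+3.+3)^`() + (cc^`() * (r k.+3.+3 - r k.+3)
   + cc * ((r k.+3.+3)^`() - (r k.+3)^`())) - ((r k.+3)^`() - (r k)^`()).
Proof.
have -> : r k.+3.+3.+3 = r k.+3.+3 + cc * (r k.+3.+3 - r k.+3) - (r k.+3 - r k).
  rewrite /r pp_rec3.
  move: (pp k) (pp k.+3) (pp k.+3.+3) cc => a b c d.
  pring.
move: cc (r k) (r k.+3) (r k.+3.+3) => d a b c.
by rewrite !(derivD, derivN, derivM).
Qed.

Lemma base0 : dv3 ((r 0)^`() - 'X).
Proof.
exists ((1+1+1+1) + 'X - (1+1+1+1+1+1+1)*'X*'X + (1+1+1+1+1)*'X*'X*'X*'X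
        - (1+1)*'X*'X*'X*'X*'X).
rewrite /r /= /q_m3 !(derivD, derivN, derivM, derivX, derivXn, derivC, d1).
norm; pring.
Qed.

Lemma base1 : dv3 ((r 3)^`() - 'X).
Proof.
exists ((1+1+1) - 'X - 'X*'X).
rewrite /r pp_rec /= /q_m3 /q_m1 /p2 /F !(derivD, derivN, derivM, derivX, derivXn, derivC, d1).
norm; pring.
Qed.

Lemma base2 : dv3 ((r 6)^`() - 'X).
Proof.
rewrite /r -[pp 6]/(pp 1.+4.+1) -qseq_pp.
exact: base0.
Qed.

Lemma mainr m : dv3 ((r (3 * m))^`() - 'X).
Proof.
suff H : dv3 ((r (3 * m))^`() - 'X) /\ dv3 ((r (3 * m.+1))^`() - 'X)
   /\ dv3 ((r (3 * m.+2))^`() - 'X) by case: H.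
elim: m => [|m [[h0 H0] [[h1 H1] [h2 H2]]]].
  by split; [exact: base0 | split; [exact: base1 | exact: base2]].
split; first by exists h1.
split; first by exists h2.
have E1 : (3 * m.+1 = (3 * m).+3)%N by rewrite mulnS.
have E2 : (3 * m.+2 = (3 * m).+3.+3)%N by rewrite !mulnS.
have E3 : (3 * m.+3 = (3 * m).+3.+3.+3)%N by rewrite !mulnS.
rewrite E1 in H1; rewrite E2 in H2; rewrite E3 r_rec3.
have [hc Hc] := dcc.
have F0 : (r (3 * m))^`() = h0 + h0 + h0 + 'X by rewrite -H0 subrK.
have F1 : (r (3 * m).+3)^`() = h1 + h1 + h1 + 'X by rewrite -H1 subrK.
have F2 : (r (3 * m).+3.+3)^`() = h2 + h2 + h2 + 'X by rewrite -H2 subrK.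
rewrite F0 F1 F2 Hc.
move: (r (3 * m).+3) (r (3 * m).+3.+3) cc => R3 R6 c.
exists (h2 + (hc * (R6 - R3) + c * (h2 - h1)) - (h1 - h0)).
set x := ('X : {poly int}); clearbody x. pring.
Qed.

Lemma arith (a : nat) : odd a -> (3 %| a)%N ->
  exists j, (a./2).+4.+1 = (3 * j.+2)%N.
Proof.
move=> Ho H3.
set k := a./2.
have Ha : a = k.*2.+1.
  by rewrite -[a in LHS]odd_double_half Ho -muln2.
have Hk : (k %% 3 = 1)%N.
  move: H3; rewrite Ha -muln2 /dvdn -[(k*2).+1]addn1 -modnDml -modnMml.
  have := ltn_pmod k (isT : (0 < 3)%N).
  by case: (k %% 3)%N => [|[|[|]]].
exists (k %/ 3)%N.
rewrite {1}(divn_eq k 3) Hk !mulnS mulnC.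
by rewrite addn1.
Qed.

Theorem lemma5p3 (n : int) :
  n <= -1 -> ~~ (2 %| n)%Z -> (3 %| n)%Z ->
  forall i : nat,
    (3 %| (q n - (1 - 'X) * (q n)^`() + 'X)`_i)%Z.
Proof.
move=> _ H2 H3 i.
rewrite !dvdzE in H2 H3.
have Ho : odd `|n|%N by move: H2; rewrite dvdn2 negbK.
have [j Hj] := arith _ Ho H3.
have [h Hh] := mainr j.+2.
rewrite /r -Hj -qseq_pp in Hh.
rewrite /q.
move: Hh; rewrite derivM derivB d1 derivX.
move: (qseq _) (qseq _)^`() => Q Q' Hh.
have -> : Q - (1 - 'X) * Q' + 'X = (- h) * 3%:R.
  have E : (0 - 1) * Q + (1 - 'X) * Q' = h + h + h + 'X by rewrite -Hh subrK.
  set x := ('X : {poly int}) in E *; clearbody x.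
  have -> : Q - (1 - x) * Q' + x = - ((0 - 1) * Q + (1 - x) * Q') + x by pring.
  rewrite E; rewrite ?mulrS ?mulr0n; pring.
rewrite mulr_natr coefMn -(mulr_natr ((- h)`_i) 3).
by apply: dvdz_mull.
Qed.
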